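(* Let $G$ be a graph on an $n$-element vertex set such that every $3$-subset of the vertices contains an edge of $G$. Then there exist a labeling of the vertex set by $[n]$ and a combinatorial shifting $G^c$ of (the edge set of) $G$ such that $G^c\supseteq B(n)=\{\{a,b\}:1\le a<b\le n,\ a+b\le n\}$.
   Context: For $i<j$, the operation $\mathrm{sh}_{ij}$ on a family $\mathcal F$ of $k$-subsets of $[n]$ replaces each $F\in\mathcal F$ with $j\in F$, $i\notin F$ and $(F\setminus\{j\})\cup\{i\}\notin\mathcal F$ by $(F\setminus\{j\})\cup\{i\}$, and leaves the other members unchanged. A family is shifted if for every $F$ in it and $i<j$ with $j\in F$, $i\notin F$, also $(F\setminus\{j\})\cup\{i\}$ is in it. A combinatorial shifting of $\mathcal F$ is any family obtained from $\mathcal F$ by applying a finite sequence of operations $\mathrm{sh}_{ij}$ ($i<j$) until a shifted family is reached. *)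

(* Defs.v *)
From mathcomp Require Import all_boot.
Set Implicit Arguments. Unset Strict Implicit. Unset Printing Implicit Defensive.

(* Labels [n] = {1,...,n} are represented by 'I_n = {0,...,n-1} via x |-> x+1;
   this preserves the order, so shifting sh_ij with i<j is unchanged. *)

Definition sh (n : nat) (i j : 'I_n) (F : {set {set 'I_n}}) : {set {set 'I_n}} :=
  [set (if [&& j \in A, i \notin A & (i |: (A :\ j)) \notin F]
        then i |: (A :\ j) else A) | A : {set 'I_n} in F].

Definition shifted (n : nat) (F : {set {set 'I_n}}) : Prop :=
  forall (A : {set 'I_n}) (i j : 'I_n), A \in F -> (i < j)%N ->
    j \in A -> i \notin A -> (i |: (A :\ j)) \in F.

Definition apply_shifts (n : nat) (s : seq ('I_n * 'I_n)%type) (F : {set {set 'I_n}}) :=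
  foldl (fun G p => sh p.1 p.2 G) F s.

Definition comb_shifting (n : nat) (F Fc : {set {set 'I_n}}) : Prop :=
  exists s : seq ('I_n * 'I_n)%type,
    all (fun p : 'I_n * 'I_n => (p.1 < p.2)%N) s /\ apply_shifts s F = Fc /\ shifted Fc.

(* B(n) = {{a,b} : 1 <= a < b <= n, a + b <= n}; with 0-based labels a', b'
   (a = a'+1, b = b'+1) the condition a + b <= n reads a'.+1 + b'.+1 <= n. *)
Definition Bn (n : nat) : {set {set 'I_n}} :=
  [set A : {set 'I_n} | [exists a : 'I_n, exists b : 'I_n,
     [&& (a < b)%N, (a.+1 + b.+1 <= n)%N & A == [set a; b]]]].

(* Main.v *)
Require Import Defs.
From mathcomp Require Import all_boot.
From mathcomp Require Import zify.
Set Implicit Arguments. Unset Strict Implicit. Unset Printing Implicit Defensive.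

Lemma pairD1 (X : finType) (x y : X) : x != y -> [set x; y] :\ x = [set y].
Proof.
move=> xy; apply/setP => z; rewrite !inE.
by case: (eqVneq z x) => [->|]; rewrite ?(negbTE xy) ?andbF ?andbT // eq_sym.
Qed.

Section Sh.
Variable n : nat.
Implicit Types (F D : {set {set 'I_n}}) (A : {set 'I_n}) (i j : 'I_n).

Lemma S1 i j F A : A \in F -> (j \in A -> i \notin A -> (i |: (A :\ j)) \in F) ->
  A \in sh i j F.
Proof.
move=> HA H; apply/imsetP; exists A => //.
case: (boolP (j \in A)) => Hj //=; case: (boolP (i \in A)) => Hi //=.
by rewrite (H Hj Hi).
Qed.

Lemma S2 i j F A : A \in F -> j \in A -> i \notin A -> (i |: (A :\ j)) \in sh i j F.
Proof.
move=> HA Hj Hi; case: (boolP ((i |: (A :\ j)) \in F)) => HB.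
  by apply: S1 => // _; rewrite setU11.
by apply/imsetP; exists A => //; rewrite Hj Hi HB.
Qed.

Lemma persist D F s : shifted D -> D \subset F ->
  all (fun p : 'I_n * 'I_n => (p.1 < p.2)%N) s -> D \subset apply_shifts s F.
Proof.
move=> HD; elim: s F => [|[i j] s IH] F //= HDF /andP[Hij Hs].
apply: IH => //; apply/subsetP => A HA; apply: S1; first by apply: (subsetP HDF).
by move=> Hj Hi; apply: (subsetP HDF); apply: HD.
Qed.

Definition w A := (\sum_(x in A) (x : nat))%N.
Definition mu F := (\sum_(A in F) w A)%N.

Lemma wD1 A j : j \in A -> w A = (j + w (A :\ j))%N.
Proof.
move=> Hj; rewrite /w (bigD1 j) //=; congr (_ + _)%N.
by apply: eq_bigl => x; rewrite !inE andbC.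
Qed.

Lemma wU1 A i : i \notin A -> w (i |: A) = (i + w A)%N.
Proof.
move=> Hi; rewrite /w (bigD1 i) ?setU11 //=; congr (_ + _)%N.
apply: eq_bigl => x; rewrite !inE.
by case: (eqVneq x i) => [->|] //=; rewrite ?(negbTE Hi) ?andbT ?andbF.
Qed.

Lemma recover A i j : j \in A -> i \notin A -> i != j ->
  A = j |: ((i |: (A :\ j)) :\ i).
Proof.
move=> Hj Hi ij; apply/setP => x; rewrite !inE.
case: (eqVneq x j) => [->|xj] //=; case: (eqVneq x i) => [->|xi] //=.
by rewrite (negbTE Hi).
Qed.

Lemma mu_sh i j F A : (i < j)%N -> A \in F -> j \in A -> i \notin A ->
  (i |: (A :\ j)) \notin F -> (mu (sh i j F) < mu F)%N.
Proof.
move=> ij HA Hj Hi HB.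
have ij' : i != j by apply/eqP => e; move: ij; rewrite e ltnn.
set g := fun A : {set 'I_n} => if [&& j \in A, i \notin A & (i |: (A :\ j)) \notin F]
        then i |: (A :\ j) else A.
have ginj : {in F &, injective g}.
  move=> A1 A2 H1 H2; rewrite /g.
  case: (boolP [&& j \in A1, i \notin A1 & i |: (A1 :\ j) \notin F]) => [/and3P[a1 b1 c1]|n1];
  case: (boolP [&& j \in A2, i \notin A2 & i |: (A2 :\ j) \notin F]) => [/and3P[a2 b2 c2]|n2] //.
  - by move=> e; rewrite (recover a1 b1 ij') (recover a2 b2 ij') e.
  - by move=> e; move: c1; rewrite e H2.
  - by move=> e; move: c2; rewrite -e H1.
have gle : forall A, (w (g A) <= w A)%N.
  move=> A1; rewrite /g; case: (boolP [&& j \in A1, i \notin A1 & i |: (A1 :\ j) \notin F]) => //.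
  case/and3P => a1 b1 _; rewrite wU1; last by rewrite !inE negb_and b1 orbT.
  by rewrite [w A1](wD1 a1) leq_add2r ltnW.
rewrite /mu /sh -/g (big_imset _ ginj) /= [X in (_ < X)%N](bigD1 A) //= (bigD1 A) //=.
rewrite -addSn leq_add //; last by apply: leq_sum => ? _; apply: gle.
rewrite /g Hj Hi HB /= wU1; last by rewrite !inE negb_and Hi orbT.
by rewrite [w A](wD1 Hj) ltn_add2r.
Qed.

Lemma terminate F : exists s : seq ('I_n * 'I_n),
  all (fun p : 'I_n * 'I_n => (p.1 < p.2)%N) s /\ shifted (apply_shifts s F).
Proof.
have [k Hk] : exists k, (mu F < k)%N by exists (mu F).+1.
elim: k F Hk => [|k IH] F // Hk.
case: (boolP [exists A in F, exists i : 'I_n, exists j : 'I_n,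
   [&& (i < j)%N, j \in A, i \notin A & (i |: (A :\ j)) \notin F]]).
  case/existsP => A /andP[HA /existsP[i /existsP[j /and4P[ij Hj Hi HB]]]].
  have := mu_sh ij HA Hj Hi HB => Hlt.
  have [s [Hs Hsh]] := IH (sh i j F) (leq_trans Hlt Hk).
  by exists ((i, j) :: s); rewrite /= ij Hs.
move=> Hn; exists [::]; split => // A i j HA ij Hj Hi.
case: (boolP (i |: (A :\ j) \in F)) => // HB; exfalso; move/negP: Hn; apply.
apply/existsP; exists A; rewrite HA /=; apply/existsP; exists i; apply/existsP; exists j.
by rewrite ij Hj Hi HB.
Qed.

Lemma inBn (a b : 'I_n) : (a < b)%N -> (a.+1 + b.+1 <= n)%N -> [set a; b] \in Bn n.
Proof.
move=> ab abn; rewrite inE; apply/existsP; exists a; apply/existsP; exists b.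
by rewrite ab abn eqxx.
Qed.

Lemma BnP A : A \in Bn n -> exists a b : 'I_n, [/\ (a < b)%N, (a.+1 + b.+1 <= n)%N & A = [set a; b]].
Proof.
rewrite inE => /existsP[a /existsP[b /and3P[ab abn /eqP e]]]; by exists a, b.
Qed.

Lemma Bn_shifted : shifted (Bn n).
Proof.
move=> A i j /BnP[a [b [ab abn ->]]] ij Hj; rewrite in_set2 negb_or => /andP[ia ib].
have anb : a != b by apply/eqP => e; move: ab; rewrite e ltnn.
case/set2P: Hj => ej; subst j.
  rewrite pairD1 //; apply: inBn; lia.
rewrite [[set a; b]]setUC pairD1 1?eq_sym //.
case: (ltngtP i a) => [lt|gt|e].
- apply: inBn; lia.
- rewrite setUC; apply: inBn; lia.
- by move: ia; rewrite -val_eqE /= e eqxx.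
Qed.

End Sh.

Section Core.
Variables (n K : nat) (F0 : {set {set 'I_n}}).
Hypothesis HK : (K + K <= n)%N.
Hypothesis H1 : forall a b c : 'I_n, a != b -> a != c -> b != c ->
  [|| [set a; b] \in F0, [set a; c] \in F0 | [set b; c] \in F0].
Hypothesis H2 : forall a b : 'I_n, (a < K)%N -> (a + b + 1 = n)%N -> [set a; b] \notin F0.
Hypothesis H3 : forall a b : 'I_n, (K <= a)%N -> (K <= b)%N -> (a + K < n)%N -> (b + K < n)%N ->
  a != b -> [set a; b] \in F0.

Definition Inv (t : nat) (F : {set {set 'I_n}}) :=
  (forall a b : 'I_n, (a < t)%N -> (a < b)%N -> (a.+1 + b.+1 <= n)%N -> [set a; b] \in F) /\
  (forall a b : 'I_n, (t <= a)%N -> (t <= b)%N -> (a + t < n)%N -> (b + t < n)%N ->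
     [set a; b] \in F0 -> [set a; b] \in F).

Lemma neq_ord (a b : 'I_n) : (a : nat) <> b -> a != b.
Proof. by move=> h; apply/eqP => e; apply: h; rewrite e. Qed.

Lemma step t F (i j : 'I_n) : (t < K)%N -> Inv t F -> (i : nat) = t -> (i + j + 1 = n)%N ->
  Inv t.+1 (sh i j F).
Proof.
move=> tK [Ha Hb] it ijn; split; last first.
  move=> a b ta tb an bn Hab; apply: S1; first by apply: Hb => //; lia.
  rewrite in_set2 => /orP[] /eqP e; exfalso; subst; lia.
move=> a b at1 ab abn.
have ij : i != j by apply: neq_ord; lia.
case: (ltngtP a t) => [lt|gt|e]; last first.
- have ai : a = i by apply: val_inj; rewrite /= e it.
  subst a.
  have bj : j != b by apply: neq_ord; lia.
  have ib : i != b by apply: neq_ord; lia.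
  case/or3P: (H1 ij ib bj) => H.
  + by move: H; rewrite (negbTE (H2 _ _)) //; lia.
  + apply: S1; first by apply: Hb => //; lia.
    by rewrite in_set2 => /orP[] /eqP e'; exfalso; subst; lia.
  + have Hjb : [set j; b] \in F by apply: Hb => //; lia.
    have -> : [set i; b] = i |: ([set j; b] :\ j) by rewrite pairD1.
    by apply: S2 => //; [rewrite setU11 | rewrite in_set2 negb_or ij ib].
- lia.
- apply: S1; first by apply: Ha.
  rewrite in_set2 => /orP[] /eqP e; first by exfalso; subst; lia.
  subst b => _.
  have aj : a != j by apply: neq_ord; lia.
  rewrite [[set a; j]]setUC pairD1 1?eq_sym // setUC; apply: Ha; lia.
Qed.

Lemma loop t : (t <= K)%N -> exists s : seq ('I_n * 'I_n),
  all (fun p : 'I_n * 'I_n => (p.1 < p.2)%N) s /\ Inv t (apply_shifts s F0).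
Proof.
elim: t => [|t IH] tK.
  exists [::]; split => //; split => //.
have [s [Hs HI]] := IH (ltnW tK).
have ti : (t < n)%N by lia.
have tj : (n - t.+1 < n)%N by lia.
exists (rcons s (Ordinal ti, Ordinal tj)); split.
  by rewrite all_rcons /= Hs andbT; lia.
rewrite /apply_shifts foldl_rcons; apply: step => //=; lia.
Qed.

Lemma core : exists s : seq ('I_n * 'I_n),
  all (fun p : 'I_n * 'I_n => (p.1 < p.2)%N) s /\ Bn n \subset apply_shifts s F0.
Proof.
have [s [Hs [Ha Hb]]] := loop (leqnn K).
exists s; split => //; apply/subsetP => A /BnP[a [b [ab abn ->]]].
case: (ltnP a K) => aK; first by apply: Ha.
apply: Hb; try lia; apply: H3; try lia; apply: neq_ord; lia.
Qed.

End Core.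

Section TSide.
Variables (T : finType) (E : {set {set T}}).

Definition lay (p : seq (T * T)) (r : seq T) := map fst p ++ r ++ rev (map snd p).

Lemma greedy (W : {set T}) : exists p r,
  [/\ uniq (lay p r), lay p r =i W,
      all (fun q => [set q.1; q.2] \notin E) p &
      forall x y, x \in r -> y \in r -> x != y -> [set x; y] \in E].
Proof.
have [k Hk] : exists k, (#|W| < k)%N by exists #|W|.+1.
elim: k W Hk => [|k IH] W // Hk.
case: (boolP [exists x in W, exists y in W, (x != y) && ([set x; y] \notin E)]).
  case/existsP => x /andP[xW /existsP[y /andP[yW /andP[xy nE]]]].
  set W' := W :\ x :\ y.
  have cW : (#|W'| < k)%N.
    have : (#|W'| < #|W :\ x|)%N by apply: proper_card; apply: properD1; rewrite !inE eq_sym xy.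
    have : (#|W :\ x| < #|W|)%N by apply: proper_card; apply: properD1.
    lia.
  have [p [r [U M A C]]] := IH W' cW.
  have Lay : lay ((x, y) :: p) r = x :: rcons (lay p r) y.
    by rewrite /lay /= rev_cons !rcons_cat.
  exists ((x, y) :: p), r; split => //; last by rewrite /= nE.
  - rewrite Lay cons_uniq rcons_uniq U mem_rcons in_cons (negbTE xy) !M !inE !eqxx.
    by rewrite !andbF.
  - move=> z; rewrite Lay in_cons mem_rcons in_cons M !inE.
    by case: (eqVneq z x) => [->|zx] //=; case: (eqVneq z y) => [->|zy] //=.
move=> Hn; exists [::], (enum W); split => //.
- by rewrite /lay /= cats0 enum_uniq.
- by move=> z; rewrite /lay /= cats0 mem_enum.
- move=> a b; rewrite !mem_enum => aW bW ab.
  case: (boolP ([set a; b] \in E)) => // nE; exfalso; move/negP: Hn; apply.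
  by apply/existsP; exists a; rewrite aW; apply/existsP; exists b; rewrite bW ab nE.
Qed.
End TSide.

Lemma triple (T : finType) (E : {set {set T}})
  (hE : forall e, e \in E -> #|e| = 2)
  (h3 : forall S : {set T}, #|S| = 3 -> exists2 e, e \in E & e \subset S)
  (x y z : T) : x != y -> x != z -> y != z ->
  [|| [set x; y] \in E, [set x; z] \in E | [set y; z] \in E].
Proof.
move=> xy xz yz.
have c3 : #|[set x; y; z]| = 3.
  rewrite -setUA cardsU1 cardsU1 cards1 !inE negb_or xy xz yz.
  done.
have [e He eS] := h3 _ c3.
have /cards2P [u [v [uv eu]]] : #|e| == 2 by rewrite hE.
subst e.
have uS : u \in [set x; y; z] by apply: (subsetP eS); rewrite !inE eqxx.
have vS : v \in [set x; y; z] by apply: (subsetP eS); rewrite !inE eqxx orbT.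
move: uS vS uv He; rewrite !inE.
move=> /orP[/orP[]|] /eqP -> /orP[/orP[]|] /eqP -> //; rewrite ?eqxx // => _ H;
  by rewrite ?H ?orbT //; move: H; rewrite setUC => H; rewrite ?H ?orbT.
Qed.

Theorem mainTheorem6 (T : finType) (n : nat) (E : {set {set T}})
  (hn : #|T| = n)
  (hE : forall e, e \in E -> #|e| = 2)
  (h3 : forall S : {set T}, #|S| = 3 -> exists2 e, e \in E & e \subset S) :
  exists f : T -> 'I_n, bijective f /\
    exists Gc : {set {set 'I_n}},
      comb_shifting [set f @: e | e : {set T} in E] Gc /\ Bn n \subset Gc.
Proof.
have [p [r [U M A C]]] := greedy E setT.
set s := lay p r in U M *.
have sz : size s = n.
  move/card_uniqP: (U) => <-; rewrite -hn -cardsT; apply: eq_card => x; by rewrite M.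
have fidx : forall x, (index x s < n)%N by move=> x; rewrite -sz index_mem M inE.
pose f := fun x => Ordinal (fidx x).
have finj : injective f.
  move=> x y /(congr1 val) /= e; apply: (@index_inj _ x s) => //; by rewrite M inE.
have fbij : bijective f by apply: inj_card_bij => //; rewrite card_ord hn.
exists f; split => //.
case: fbij => g fg gf.
have ginj : injective g by apply: (can_inj gf).
have gnth : forall (a : 'I_n) x0, g a = nth x0 s a.
  move=> a x0; apply: finj; rewrite gf; apply: val_inj => /=.
  by rewrite index_uniq // sz.
set F0 := [set f @: e | e : {set T} in E].
have Mem : forall a b : 'I_n, ([set a; b] \in F0) = ([set g a; g b] \in E).
  move=> a b; have img : f @: [set g a; g b] = [set a; b] by rewrite imsetU1 imset_set1 !gf.
  apply/idP/idP.
    by case/imsetP => e He; rewrite -img => /(imset_inj finj) ->.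
  by move=> H; rewrite -img; apply: imset_f.
have szs : size s = (size p + (size r + size p))%N by rewrite /s /lay !size_cat size_rev !size_map.
have [s1 [Hs1 HB1]] : exists s1 : seq ('I_n * 'I_n),
  all (fun p : 'I_n * 'I_n => (p.1 < p.2)%N) s1 /\ Bn n \subset apply_shifts s1 F0.
  apply: (@core n (size p)).
  - lia.
  - move=> a b c ab ac bc; rewrite !Mem; apply: triple => //.
    + by apply: contra ab => /eqP /ginj ->.
    + by apply: contra ac => /eqP /ginj ->.
    + by apply: contra bc => /eqP /ginj ->.
  - move=> a b aK abn; rewrite Mem.
    have q0 := (g a, g a).
    rewrite (gnth a (g a)) (gnth b (g a)) /s /lay.
    rewrite nth_cat size_map aK (nth_map q0) //.
    rewrite nth_cat size_map ifF; last by apply/negbTE; rewrite -leqNgt; lia.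
    rewrite nth_cat ifF; last by apply/negbTE; rewrite -leqNgt; lia.
    rewrite nth_rev ?size_map; last by lia.
    rewrite (nth_map q0); last by move: aK; case: (size p) => // k _; rewrite subSS ltnS leq_subr.
    have -> : (size p - (b - size p - size r).+1 = a)%N by lia.
    by move/all_nthP: A => /(_ q0 a aK).
  - move=> a b Ka Kb aK bK ab; rewrite Mem.
    have inr : forall c : 'I_n, (size p <= c)%N -> (c + size p < n)%N -> g c \in r.
      move=> c Kc cK; rewrite (gnth c (g c)) /s /lay nth_cat size_map ifF; last first.
        by apply/negbTE; rewrite -leqNgt.
      rewrite nth_cat ifT; last by lia.
      apply: mem_nth; move: sz szs Kc cK; move: (size s) (size p) (size r) (nat_of_ord c) => S0 P0 R0 C0; lia.
    apply: C; [exact: inr | exact: inr |].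
    by apply: contra ab => /eqP /ginj ->.
have [s2 [Hs2 Hsh]] := terminate (apply_shifts s1 F0).
exists (apply_shifts s2 (apply_shifts s1 F0)); split.
  exists (s1 ++ s2); split; first by rewrite all_cat Hs1 Hs2.
  by split => //; rewrite /apply_shifts foldl_cat.
by apply: persist => //; apply: Bn_shifted.
Qed.
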